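(* Let $\mathcal G$ be the $\mathbb Z$-periodic graph obtained from the one-dimensional lattice $\mathbb Z$ by attaching a pendant edge at each vertex, and let $H=A+Q$ with a $\mathbb Z$-periodic potential $Q$. Its fundamental graph has two vertices $v_1$ (degree 3) and $v_2$ (degree 1); write $q_s=Q(v_s)$. Then (a) $\mathcal I_1^0(Q)=q_1+q_2$, $\mathcal I_2^0(Q)=\frac12(q_1^2+q_2^2)$, $\mathcal I_2^{1}(Q)=\mathcal I_2^{-1}(Q)=q_1$ form a complete system of Floquet spectral invariants of $H$; (b) $\mathcal I_1(Q)=q_1+q_2$, $\mathcal I_2(Q)=\frac12(q_1^2+q_2^2)+2q_1$ form a complete system of periodic spectral invariants of $H$; (c) if a (complex-valued) potential $P$ has the same periodic spectrum as $Q$ (i.e. $\sigma(A(0)+P)=\sigma(A(0)+Q)$), then $P=(q_1,q_2)$ or $P=(q_2-2,q_1+2)$; in particular if $Q=0$ then $P=0$ or $P=(-2,2)$, and if $Q=-\varkappa=(-3,-1)$ then $P=-\varkappa$.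
   Context: The fundamental graph $\mathcal G_*$ consists of vertices $v_1,v_2$, a loop $\mathbf e_1$ at $v_1$ with edge index $1$, and an edge $\mathbf e_2$ between $v_1$ and $v_2$ with index $0$ (each taken with both orientations; inverse edge has negated index). Floquet operators: $H(k)=A(k)+Q$ on $\mathbb C^2$, $(A(k)f)(v)=\sum_{\mathbf e=(v,u)}e^{ik\tau(\mathbf e)}f(u)$, $k\in\mathbb R/2\pi\mathbb Z$; Floquet spectrum $\{\sigma(H(k))\}_k$, periodic spectrum $\sigma(H(0))$. A functional is a Floquet (periodic) spectral invariant if it takes equal values on potentials with equal Floquet (periodic) spectra; a family is complete if its equality is equivalent to equality of the spectra. Cycles: closed paths of oriented edges up to cyclic permutation; prime if not an $r$-fold repetition with $r\ge2$; length $|\mathbf c|$, index $\tau(\mathbf c)$ = sum of edge indices. Modified graph $\widetilde{\mathcal G}_*$: add a loop $\mathbf e_v$ of index $0$ at each vertex; weight $\omega(\mathbf c,Q)$ = product of $Q(v)$ over added loops $\mathbf e_v$ traversed (other edges weight 1). $\mathcal P,\widetilde{\mathcal P}$: prime cycles in $\mathcal G_*,\widetilde{\mathcal G}_*$. $\mathcal I_n^{\mathrm m}(Q)=\sum\frac1r\omega^r(\mathbf c,Q)$ over $r\in\{1,\dots,n\}$, $\mathbf c\in\widetilde{\mathcal P}\setminus\mathcal P$, $r|\mathbf c|=n$, $r\tau(\mathbf c)=\mathrm m$; $\mathcal I_n(Q)$ the same without index condition. *)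

(* Defs.v *)
From HB Require Import structures.
From mathcomp Require Import all_boot all_order all_algebra.
From mathcomp Require Import all_classical all_reals all_analysis.
From mathcomp Require Import complex.
Set Implicit Arguments. Unset Strict Implicit. Unset Printing Implicit Defensive.
Import Order.TTheory GRing.Theory Num.Theory.
Local Open Scope ring_scope.

Definition vertex := 'I_2.
Definition v1 : vertex := ord0.
Definition v2 : vertex := ord_max.

(* Oriented edges of the modified graph:
   E1  : loop e1 at v1, index 1;  E1b : its inverse, index -1;
   E2  : edge e2 from v1 to v2, index 0;  E2b : its inverse v2 -> v1, index 0;
   Ev1 : added loop e_{v1} at v1, index 0;  Ev2 : added loop e_{v2}, index 0. *)
Inductive edge := E1 | E1b | E2 | E2b | Ev1 | Ev2.

Definition edge_enc (e : edge) : 'I_6 :=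
  match e with
  | E1 => inord 0 | E1b => inord 1 | E2 => inord 2
  | E2b => inord 3 | Ev1 => inord 4 | Ev2 => inord 5 end.
Definition edge_dec (i : 'I_6) : option edge :=
  match val i with
  | 0 => Some E1 | 1 => Some E1b | 2 => Some E2
  | 3 => Some E2b | 4 => Some Ev1 | 5 => Some Ev2 | _ => None end.
Lemma edge_encK : pcancel edge_enc edge_dec.
Proof. by case; rewrite /edge_dec /= inordK. Qed.
HB.instance Definition _ := Finite.copy edge (pcan_type edge_encK).

Definition src (e : edge) : vertex :=
  match e with E1 | E1b | E2 | Ev1 => v1 | E2b | Ev2 => v2 end.
Definition tgt (e : edge) : vertex :=
  match e with E1 | E1b | E2b | Ev1 => v1 | E2 | Ev2 => v2 end.

Definition tau (e : edge) : int :=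
  match e with E1 => 1 | E1b => -1 | _ => 0 end.

Definition orig (e : edge) : bool :=
  match e with Ev1 | Ev2 => false | _ => true end.

Section Complex.
Variable R : realType.
Local Notation C := R[i].
Local Open Scope complex_scope.

Definition expi (t : R) : C := Complex (cos t) (sin t).

Definition potential := vertex -> C.

Definition Afl (k : R) : 'M[C]_2 :=
  \matrix_(v, u) \sum_(e : edge | orig e && (src e == v) && (tgt e == u))
                   expi (k * (tau e)%:~R).

Definition Hfl (Q : potential) (k : R) : 'M[C]_2 :=
  Afl k + diag_mx (\row_v Q v).

Definition spec (M : 'M[C]_2) : pred C := eigenvalue M.

Definition same_floquet_spectrum (P Q : potential) : Prop :=
  forall k : R, spec (Hfl P k) =1 spec (Hfl Q k).

Definition same_periodic_spectrum (P Q : potential) : Prop :=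
  spec (Hfl P 0) =1 spec (Hfl Q 0).

Definition eweight (Q : potential) (e : edge) : C :=
  match e with Ev1 => Q v1 | Ev2 => Q v2 | _ => 1 end.
Definition pweight (Q : potential) (s : seq edge) : C :=
  \prod_(e <- s) eweight Q e.
End Complex.

Definition pindex (s : seq edge) : int := \sum_(e <- s) tau e.

Definition closedp (s : seq edge) : bool :=
  (0 < size s)%N && cycle (fun e f => tgt e == src f) s.

(* prime: not an r-fold repetition q^r with r >= 2 (if s = q^r then
   necessarily q = take (size s %/ r) s) *)
Definition primep (s : seq edge) : bool :=
  [forall r : 'I_(size s).+1,
     ((2 <= r)%N && (r %| size s)%N) ==>
       (s != flatten (nseq r (take (size s %/ r) s)))].

Definition cyc (L : nat) (p : L.-tuple edge) : {set L.-tuple edge} :=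
  [set [tuple of rot i p] | i : 'I_L].

Definition cycles (L : nat) : {set {set L.-tuple edge}} :=
  [set cyc p | p : L.-tuple edge & closedp p].

Definition crep (L : nat) (c : {set L.-tuple edge}) : seq edge :=
  if [pick p in c] is Some p then val p else [::].

(* prime cycles of the modified graph that are not cycles of G_*
   (i.e. traverse at least one added loop) *)
Definition newprime (L : nat) (c : {set L.-tuple edge}) : bool :=
  primep (crep c) && ~~ all orig (crep c).

Definition Inm (R : realType) (n : nat) (m : int) (Q : potential R) : R[i] :=
  \sum_(1 <= r < n.+1) \sum_(1 <= L < n.+1 | (r * L)%N == n)
    \sum_(c in cycles L | newprime c && ((r%:Z * pindex (crep c))%R == m))
      (r%:R)^-1 * (pweight Q (crep c)) ^+ r.

Definition In (R : realType) (n : nat) (Q : potential R) : R[i] :=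
  \sum_(1 <= r < n.+1) \sum_(1 <= L < n.+1 | (r * L)%N == n)
    \sum_(c in cycles L | newprime c)
      (r%:R)^-1 * (pweight Q (crep c)) ^+ r.

(* Main.v *)
Set Warnings "-all".
Require Import Defs.
From HB Require Import structures.
From mathcomp Require Import all_boot all_order all_algebra.
From mathcomp Require Import all_classical all_reals all_analysis.
From mathcomp Require Import complex.
From mathcomp Require Import ring.
Import Order.TTheory GRing.Theory Num.Theory.
Local Open Scope ring_scope.

Lemma det2 (F : comRingType) (A : 'M[F]_2) :
  \det A = A ord0 ord0 * A ord_max ord_max - A ord0 ord_max * A ord_max ord0.
Proof.
rewrite (expand_det_row _ ord0) !big_ord_recl big_ord0 /cofactor !det_mx11.
rewrite !mxE /=.
have -> : lift ord0 (0 : 'I_1) = ord_max :> 'I_2 by apply/val_inj.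
have -> : lift (ord_max : 'I_2) (0 : 'I_1) = ord0 :> 'I_2 by apply/val_inj.
rewrite /= expr0 expr1; ring.
Qed.
Lemma eig2 (F : fieldType) (A : 'M[F]_2) a :
  eigenvalue A a = (\det (A - a%:M) == 0).
Proof.
by rewrite /eigenvalue /eigenspace kermx_eq0 row_free_unit unitmxE unitfE negbK.
Qed.

Definition edge_n (e : edge) : nat :=
  match e with E1 => 0 | E1b => 1 | E2 => 2 | E2b => 3 | Ev1 => 4 | Ev2 => 5 end.
Lemma eqE_edge (e f : edge) : (e == f) = (edge_n e == edge_n f)%N.
Proof. by case: e; case: f; rewrite ?eqxx //; apply/eqP. Qed.
Lemma v12 : (v1 == v2) = false. Proof. by []. Qed.
Lemma v21 : (v2 == v1) = false. Proof. by []. Qed.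
Section Quad.
Variable C : numClosedFieldType.
Definition qf (t d x : C) := x ^+ 2 - t * x + d.

Lemma two_neq0 : (2 : C) != 0. Proof. by rewrite pnatr_eq0. Qed.
Lemma four_neq0 : (4 : C) != 0. Proof. by rewrite pnatr_eq0. Qed.

Lemma eq_by0 (x y z : C) : x - y = z -> z = 0 -> x = y.
Proof. by move=> h h0; apply/eqP; rewrite -subr_eq0 h h0. Qed.

Lemma qf_root (t d : C) : exists x, qf t d x = 0.
Proof.
exists ((t + sqrtC (t ^+ 2 - 4 * d)) / 2).
have hs := sqrtCK (t ^+ 2 - 4 * d).
rewrite /qf. move: hs; set s := sqrtC _ => hs.
have h2 := two_neq0; have h4 := four_neq0.
have hd : d = (t ^+ 2 - s ^+ 2) / 4 by rewrite hs; field.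
by rewrite hd; field.
Qed.

Lemma qf_other (t d x : C) : qf t d (t - x) = qf t d x.
Proof. rewrite /qf; ring. Qed.

Lemma qf_double (t d a x : C) : qf t d a = 0 -> qf t d (t - a) = 0 -> a = t - a ->
  qf t d x = 0 -> x = a.
Proof.
rewrite /qf => ha _ hb hx.
have ht : t = a * 2 by rewrite -[X in X = _](subrK a) -hb; ring.
have hd : d = a ^+ 2 by apply: (eq_by0 _ _ _ _ ha); rewrite ht; ring.
move: hx; rewrite ht hd => hx.
have : (x - a) ^+ 2 = 0 by rewrite -hx; ring.
by move/eqP; rewrite expf_eq0 /= subr_eq0 => /eqP.
Qed.

Arguments qf_double {t d a x}.

Lemma qf_spec (t1 d1 t2 d2 : C) :
  (forall x, (qf t1 d1 x == 0) = (qf t2 d2 x == 0)) <-> (t1 = t2 /\ d1 = d2).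
Proof.
split; last by case=> -> ->.
move=> H.
have [a ha] := qf_root t1 d1.
have hb : qf t1 d1 (t1 - a) = 0 by rewrite qf_other.
have ga : qf t2 d2 a = 0 by apply/eqP; rewrite -H ha.
have gb : qf t2 d2 (t1 - a) = 0 by apply/eqP; rewrite -H hb.
have [eab|nab] := eqVneq a (t1 - a).
  have [c hc] := qf_root t2 d2.
  have hc' : qf t2 d2 (t2 - c) = 0 by rewrite qf_other.
  have fc : qf t1 d1 c = 0 by apply/eqP; rewrite H hc.
  have fc' : qf t1 d1 (t2 - c) = 0 by apply/eqP; rewrite H hc'.
  have ec := qf_double ha hb eab fc.
  have ec' := qf_double ha hb eab fc'.
  have ht : t2 = t1 by rewrite -[t2](subrK c) ec' ec {2}eab; ring.
  split; first by [].
  have e1 : d1 = t1 * a - a ^+ 2 by apply: (eq_by0 _ _ _ _ ha); rewrite /qf; ring.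
  have e2 : d2 = t2 * a - a ^+ 2 by apply: (eq_by0 _ _ _ _ hc); rewrite /qf ec; ring.
  by rewrite e1 e2 ht.
have ht : t2 = t1.
  have : (a - (t1 - a)) * (a + (t1 - a) - t2) = 0.
    by rewrite -[RHS](subrr 0) -{1}ga -gb /qf; ring.
  move/eqP; rewrite mulf_eq0 subr_eq0 (negbTE nab) /= subr_eq0 => /eqP.
  by move=> <-; ring.
split; first by [].
have e1 : d1 = t1 * a - a ^+ 2 by apply: (eq_by0 _ _ _ _ ha); rewrite /qf; ring.
have e2 : d2 = t2 * a - a ^+ 2 by apply: (eq_by0 _ _ _ _ ga); rewrite /qf; ring.
by rewrite e1 e2 ht.
Qed.
End Quad.
Arguments qf {C}. Arguments qf_spec {C}. Arguments qf_root {C}.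

Local Open Scope complex_scope.
Lemma Afl00 (R : realType) (k : R) : Afl k v1 v1 = (cos k *+ 2)%:C.
Proof.
rewrite mxE (bigD1 E1) ?eqxx // (bigD1 E1b) ?eqxx ?eqE_edge // big1 /=; last first.
  by case => //=; rewrite ?eqxx ?v21 ?andbF.
rewrite /expi mulr1 mulrN1 cosN sinN addr0 /=.
by apply/eqP; rewrite eq_complex /= mulr2n subrr !eqxx.
Qed.
Lemma Afl01 (R : realType) (k : R) : Afl k v1 v2 = 1.
Proof.
rewrite mxE (bigD1 E2) ?eqxx // big1 /=; last first.
  by case => //=; rewrite ?eqxx ?v21 ?v12 ?andbF.
rewrite /expi mulr0 cos0 sin0 addr0 //.
Qed.
Lemma Afl10 (R : realType) (k : R) : Afl k v2 v1 = 1.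
Proof.
rewrite mxE (bigD1 E2b) ?eqxx // big1 /=; last first.
  by case => //=; rewrite ?eqxx ?v21 ?v12 ?andbF.
rewrite /expi mulr0 cos0 sin0 addr0 //.
Qed.
Lemma Afl11 (R : realType) (k : R) : Afl k v2 v2 = 0.
Proof.
rewrite mxE big1 //.
by case => //=; rewrite ?eqxx ?v21 ?v12 ?andbF.
Qed.
Local Close Scope complex_scope.

Lemma spec_Hfl (R : realType) (P : potential R) k x :
  spec (Hfl P k) x = (qf (Afl k v1 v1 + P v1 + P v2) ((Afl k v1 v1 + P v1) * P v2 - 1) x == 0).
Proof.
rewrite /spec eig2 det2 /Hfl.
move: (Afl01 R k) (Afl10 R k) (Afl11 R k); move: (Afl k) => A h01 h10 h11.
rewrite !mxE -[ord0]/v1 -[ord_max]/v2 h01 h10 h11 ?eqxx ?v12 ?v21 /= /qf.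
by congr (_ == 0); ring.
Qed.

Lemma Afl0 (R : realType) : Afl (0 : R) v1 v1 = 2.
Proof. by rewrite Afl00 cos0; apply/eqP; rewrite eq_complex /= addr0 -mulr2n !eqxx. Qed.
Lemma Aflpi2 (R : realType) : Afl (pi / 2 : R) v1 v1 = 0.
Proof. by rewrite Afl00 cos_pihalf; apply/eqP; rewrite eq_complex /= mul0rn !eqxx. Qed.

Lemma spec_eq (R : realType) (P Q : potential R) k :
  spec (Hfl P k) =1 spec (Hfl Q k) <->
  (Afl k v1 v1 + P v1 + P v2 = Afl k v1 v1 + Q v1 + Q v2 /\
   (Afl k v1 v1 + P v1) * P v2 - 1 = (Afl k v1 v1 + Q v1) * Q v2 - 1).
Proof.
rewrite -qf_spec; split => H x; first by have := H x; rewrite !spec_Hfl.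
by rewrite !spec_Hfl; apply: H.
Qed.

Lemma floq_iff (R : realType) (P Q : potential R) :
  same_floquet_spectrum P Q <-> (P v1 = Q v1 /\ P v2 = Q v2).
Proof.
split.
  move=> H.
  have [t0 d0] := (spec_eq R P Q 0).1 (H 0).
  have [t1 d1] := (spec_eq R P Q (pi/2)).1 (H (pi/2)).
  move: t0 d0 t1 d1; rewrite Afl0 Aflpi2 !add0r => t0 d0 t1 d1.
  have e2 : P v2 = Q v2.
    have h : 2 * P v2 = 2 * Q v2.
      apply/subr0_eq.
      rewrite (_ : 2 * P v2 - 2 * Q v2 = (((2 + P v1) * P v2 - 1) - ((2 + Q v1) * Q v2 - 1))
          - ((P v1 * P v2 - 1) - (Q v1 * Q v2 - 1))); last by ring.
      by rewrite d0 d1 !subrr.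
    by apply: (mulfI _ h); rewrite pnatr_eq0.
  split => //.
  by move/eqP: t1; rewrite e2 (can_eq (addrK _)) => /eqP.
move=> [e1 e2] k; apply/spec_eq; by rewrite e1 e2.
Qed.

Lemma per_iff (R : realType) (P Q : potential R) :
  same_periodic_spectrum P Q <->
  (P v1 + P v2 = Q v1 + Q v2 /\ (2 + P v1) * P v2 = (2 + Q v1) * Q v2).
Proof.
rewrite /same_periodic_spectrum spec_eq Afl0; split; case=> t d; split.
- by apply: (@addrI _ 2); rewrite !addrA.
- by apply: (@addIr _ (-1)).
- by rewrite -!addrA t.
- by rewrite d.
Qed.
Lemma primep1 a : primep [:: a].
Proof. by apply/forallP => -[[|[|]] //]. Qed.
Lemma primep2 a b : primep [:: a; b] = (a != b).
Proof.
apply/forallP/idP.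
  move/(_ (inord 2)); rewrite inordK //=.
  by rewrite !eqseq_cons eqxx andbT eq_sym.
move=> H [[|[|[|]]] //= _].
by rewrite !eqseq_cons eqxx andbT eq_sym.
Qed.

Lemma crep_cyc L (p : L.+1.-tuple edge) : exists i : 'I_L.+1, crep (cyc p) = rot i p.
Proof.
rewrite /crep; case: pickP => [q /imsetP [i _ ->]|H]; first by exists i.
have : p \in cyc p.
  apply/imsetP; exists ord0 => //; apply/val_inj; by rewrite /= rot0.
by rewrite H.
Qed.

Arguments crep_cyc {L}.

Lemma cyc1 (p : 1.-tuple edge) : cyc p = [set p].
Proof.
apply/setP => q; rewrite inE; apply/imsetP/eqP => [[i _ ->]|->].
  by apply/val_inj; rewrite /= ord1 rot0.
by exists ord0 => //; apply/val_inj; rewrite /= rot0.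
Qed.

Lemma cyc2 (p : 2.-tuple edge) : cyc p = [set p; [tuple of rot 1 p]].
Proof.
apply/setP => q; rewrite !inE; apply/imsetP/orP => [[[[|[|]] //= Hi] _ ->]|[/eqP->|/eqP->]].
- by left; apply/eqP/val_inj; rewrite /= rot0.
- by right; apply/eqP/val_inj.
- by exists ord0 => //; apply/val_inj; rewrite /= rot0.
- by exists (inord 1) => //; apply/val_inj; rewrite /= inordK.
Qed.

Lemma crep1 (a : edge) : crep (cyc [tuple a]) = [:: a].
Proof. by have [i ->] := crep_cyc [tuple a]; rewrite ord1 rot0. Qed.

Definition c1a := cyc [tuple Ev1].
Definition c1b := cyc [tuple Ev2].

Lemma cycles1_new c : (c \in cycles 1) && newprime c = (c \in [set c1a; c1b]).
Proof.
apply/idP/idP.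
  case/andP => /imsetP [p]; rewrite inE => cp ->.
  case/tupleP: p cp => a p; rewrite tuple0.
  rewrite /newprime; have [i ->] := crep_cyc [tuple a]; rewrite ord1 rot0 /=.
  case: a => /= _ H; rewrite ?andbF in H; try done; rewrite !inE /c1a /c1b; by apply/orP; (left + right); apply/eqP; congr cyc; apply/val_inj.
rewrite !inE => /orP [] /eqP ->; rewrite /c1a /c1b /newprime crep1 primep1 /= andbT /cycles;
  apply/imsetP; first [by exists [tuple Ev1]; rewrite ?inE | by exists [tuple Ev2]; rewrite ?inE].
Qed.

Lemma c1ab : c1a != c1b.
Proof.
apply/eqP => H; have : [tuple Ev1] \in c1b by rewrite -H /c1a cyc1 inE.
by rewrite /c1b cyc1 inE => /eqP/(congr1 val).
Qed.

Lemma sum1 (T : nmodType) (P : pred {set 1.-tuple edge}) (F : {set 1.-tuple edge} -> T) :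
  \sum_(c in cycles 1 | newprime c && P c) F c =
  (if P c1a then F c1a else 0) + (if P c1b then F c1b else 0).
Proof.
rewrite (eq_bigl (fun c => (c \in [set c1a; c1b]) && P c)); last first.
  by move=> c; rewrite andbA cycles1_new.
by rewrite big_mkcondr big_setU1 ?big_set1 //= inE c1ab.
Qed.

Lemma cyc_swap a b : cyc [tuple a; b] = cyc [tuple b; a].
Proof. by rewrite !cyc2 finset.setUC; congr ([set _] :|: [set _]); apply/val_inj. Qed.

Definition c2a := cyc [tuple Ev1; E1].
Definition c2b := cyc [tuple Ev1; E1b].

Lemma crep2 a b : crep (cyc [tuple a; b]) = [:: a; b] \/ crep (cyc [tuple a; b]) = [:: b; a].
Proof. by have [[[|[|]] //= _] ->] := crep_cyc [tuple a; b]; [left | right]. Qed.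

Lemma cycles2_new c : (c \in cycles 2) && newprime c = (c \in [set c2a; c2b]).
Proof.
apply/idP/idP; last first.
{ rewrite !inE => /orP [] /eqP ->; rewrite /c2a /c2b /newprime.
  all: first [case: (crep2 Ev1 E1) => -> | case: (crep2 Ev1 E1b) => ->].
  all: rewrite primep2 eqE_edge /= andbT /cycles.
  all: apply/imsetP; first [by exists [tuple Ev1; E1]; rewrite ?inE | by exists [tuple Ev1; E1b]; rewrite ?inE]. }
case/andP => /imsetP [p]; rewrite inE => cp ->.
case/tupleP: p cp => a p; case/tupleP: p => b p; rewrite tuple0.
rewrite /newprime; case: (crep2 a b) => ->.
all: case: a; case: b => /= H0 H; rewrite ?primep2 ?eqE_edge /= ?andbF in H; try done.
all: rewrite !inE /c2a /c2b.
all: first [by apply/orP; left; apply/eqP; congr cyc; apply/val_inj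
           |by apply/orP; right; apply/eqP; congr cyc; apply/val_inj
           |by apply/orP; left; apply/eqP; rewrite cyc_swap; congr cyc; apply/val_inj
           |by apply/orP; right; apply/eqP; rewrite cyc_swap; congr cyc; apply/val_inj].
Qed.

Lemma c2ab : c2a != c2b.
Proof.
apply/eqP => H; have : [tuple Ev1; E1] \in c2b by rewrite -H /c2a cyc2 !inE eqxx.
by rewrite /c2b cyc2 !inE => /orP [] /eqP/(congr1 val).
Qed.

Lemma sum2 (T : nmodType) (P : pred {set 2.-tuple edge}) (F : {set 2.-tuple edge} -> T) :
  \sum_(c in cycles 2 | newprime c && P c) F c =
  (if P c2a then F c2a else 0) + (if P c2b then F c2b else 0).
Proof.
rewrite (eq_bigl (fun c => (c \in [set c2a; c2b]) && P c)); last first.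
  by move=> c; rewrite andbA cycles2_new.
by rewrite big_mkcondr big_setU1 ?big_set1 //= inE c2ab.
Qed.

Lemma pindex_cons e s : pindex (e :: s) = tau e + pindex s.
Proof. by rewrite /pindex big_cons. Qed.
Lemma pindex_nil : pindex [::] = 0.
Proof. by rewrite /pindex big_nil. Qed.
Lemma pweight_cons (R : realType) (Q : potential R) e s :
  pweight Q (e :: s) = eweight Q e * pweight Q s.
Proof. by rewrite /pweight big_cons. Qed.
Lemma pweight_nil (R : realType) (Q : potential R) : pweight Q [::] = 1.
Proof. by rewrite /pweight big_nil. Qed.

Lemma Inm10 (R : realType) (Q : potential R) : Inm 1 0 Q = Q v1 + Q v2.
Proof.
rewrite /Inm big_nat1 big_mkcond big_nat1 /= sum1 /c1a /c1b !crep1.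
rewrite !pindex_cons !pweight_cons pindex_nil pweight_nil /=.
by rewrite invr1 !mul1r !mulr1 !expr1.
Qed.

Lemma sum12 (T : nmodType) (P : pred nat) (F : nat -> T) :
  \sum_(1 <= L < 3 | P L) F L = (if P 1%N then F 1%N else 0) + (if P 2%N then F 2%N else 0).
Proof. by rewrite big_mkcond big_ltn // big_nat1. Qed.

Lemma Inm2 (R : realType) (m : int) (Q : potential R) : Inm 2 m Q =
  (if 1 == m then Q v1 else 0) + (if -1 == m then Q v1 else 0) +
  (if 0 == m then 2^-1 * (Q v1 ^+ 2 + Q v2 ^+ 2) else 0).
Proof.
rewrite /Inm (big_ltn (m:=1)) // big_nat1 !sum12 /=.
rewrite sum1 sum2 /c1a /c1b /c2a /c2b !crep1.
case: (crep2 Ev1 E1) => ->; case: (crep2 Ev1 E1b) => ->.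
all: rewrite !pindex_cons !pweight_cons pindex_nil pweight_nil /=.
all: rewrite !(add0r, addr0, mul1r, mulr1, mulr0, invr1, expr1).
all: by case: (0 == m); rewrite ?mulrDr ?addr0.
Qed.

Lemma sum1' (T : nmodType) (F : {set 1.-tuple edge} -> T) :
  \sum_(c in cycles 1 | newprime c) F c = F c1a + F c1b.
Proof.
rewrite (eq_bigl (fun c => (c \in cycles 1) && (newprime c && true))).
  by rewrite sum1.
by move=> c; rewrite andbT.
Qed.
Lemma sum2' (T : nmodType) (F : {set 2.-tuple edge} -> T) :
  \sum_(c in cycles 2 | newprime c) F c = F c2a + F c2b.
Proof.
rewrite (eq_bigl (fun c => (c \in cycles 2) && (newprime c && true))).
  by rewrite sum2.
by move=> c; rewrite andbT.
Qed.

Lemma In1 (R : realType) (Q : potential R) : In 1 Q = Q v1 + Q v2.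
Proof.
rewrite /In big_nat1 big_mkcond big_nat1 /= sum1' /c1a /c1b !crep1.
rewrite !pweight_cons pweight_nil /=.
by rewrite invr1 !mul1r !mulr1 !expr1.
Qed.

Lemma In2 (R : realType) (Q : potential R) :
  In 2 Q = 2^-1 * (Q v1 ^+ 2 + Q v2 ^+ 2) + 2 * Q v1.
Proof.
rewrite /In (big_ltn (m:=1)) // big_nat1 !sum12 /=.
rewrite sum1' sum2' /c1a /c1b /c2a /c2b !crep1.
case: (crep2 Ev1 E1) => ->; case: (crep2 Ev1 E1b) => ->.
all: rewrite !pweight_cons pweight_nil /=.
all: rewrite !(add0r, addr0, mul1r, mulr1, mulr0, invr1, expr1).
all: ring.
Qed.

Lemma Inm10' (R : realType) (Q : potential R) : Inm 1 0 Q = Q v1 + Q v2.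
Proof. exact: Inm10. Qed.

Lemma Inm20 (R : realType) (Q : potential R) : Inm 2 0 Q = 2^-1 * (Q v1 ^+ 2 + Q v2 ^+ 2).
Proof. by rewrite Inm2 /= !add0r. Qed.
Lemma Inm21 (R : realType) (Q : potential R) : Inm 2 1 Q = Q v1.
Proof. by rewrite Inm2 /= !addr0. Qed.
Lemma Inm2N1 (R : realType) (Q : potential R) : Inm 2 (-1) Q = Q v1.
Proof. by rewrite Inm2 /= add0r addr0. Qed.

Lemma In2_id (R : realType) (Q : potential R) :
  In 2 Q = 2^-1 * (Q v1 + Q v2) ^+ 2 + 2 * (Q v1 + Q v2) - (2 + Q v1) * Q v2.
Proof. by rewrite In2; field. Qed.

Lemma percase (R : realType) (P Q : potential R) : same_periodic_spectrum P Q ->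
     (P v1 = Q v1 /\ P v2 = Q v2) \/
     (P v1 = Q v2 - 2 /\ P v2 = Q v1 + 2).
Proof.
move/per_iff => [s d].
have e2 : P v2 = Q v1 + Q v2 - P v1 by rewrite -s; ring.
have : (P v1 - Q v1) * (Q v2 - 2 - P v1) = 0.
  apply/eqP; rewrite -subr_eq0; apply/eqP.
  rewrite (_ : (P v1 - Q v1) * (Q v2 - 2 - P v1) - 0 = (2 + P v1) * P v2 - (2 + Q v1) * Q v2).
    by rewrite d subrr.
  rewrite e2; ring.
move/eqP; rewrite mulf_eq0 !subr_eq0 => /orP [] /eqP h.
  by left; split => //; rewrite e2 h; ring.
by right; split; [rewrite -h | rewrite e2 -h]; ring.
Qed.
Arguments percase {R P Q}.

Theorem mainTheorem7 (R : realType) (Q : potential R) :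
  (* (a) Floquet spectral invariants: values and completeness *)
  (Inm 1 0 Q = Q v1 + Q v2 /\
   Inm 2 0 Q = 2^-1 * (Q v1 ^+ 2 + Q v2 ^+ 2) /\
   Inm 2 1 Q = Q v1 /\ Inm 2 (-1) Q = Q v1 /\
   (forall P : potential R,
      same_floquet_spectrum P Q <->
      [/\ Inm 1 0 P = Inm 1 0 Q, Inm 2 0 P = Inm 2 0 Q,
          Inm 2 1 P = Inm 2 1 Q & Inm 2 (-1) P = Inm 2 (-1) Q])) /\
  (* (b) periodic spectral invariants: values and completeness *)
  (In 1 Q = Q v1 + Q v2 /\
   In 2 Q = 2^-1 * (Q v1 ^+ 2 + Q v2 ^+ 2) + 2 * Q v1 /\
   (forall P : potential R,
      same_periodic_spectrum P Q <-> (In 1 P = In 1 Q /\ In 2 P = In 2 Q))) /\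
  (* (c) potentials with the same periodic spectrum *)
  (forall P : potential R, same_periodic_spectrum P Q ->
     (P v1 = Q v1 /\ P v2 = Q v2) \/
     (P v1 = Q v2 - 2 /\ P v2 = Q v1 + 2)) /\
  (Q v1 = 0 /\ Q v2 = 0 ->
   forall P : potential R, same_periodic_spectrum P Q ->
     (P v1 = 0 /\ P v2 = 0) \/ (P v1 = -2 /\ P v2 = 2)) /\
  (Q v1 = -3 /\ Q v2 = -1 ->
   forall P : potential R, same_periodic_spectrum P Q ->
     P v1 = -3 /\ P v2 = -1).
Proof.
split.
  split; first exact: Inm10. split; first exact: Inm20.
  split; first exact: Inm21. split; first exact: Inm2N1.
  move=> P; apply: (iff_trans (floq_iff _ P Q)).
  rewrite !Inm10 !Inm20 !Inm21 !Inm2N1; split.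
    by case=> -> ->.
  case=> h1 _ h3 _; split => //.
  by apply: (@addrI _ (P v1)); rewrite {2}h3.
split.
  split; first exact: In1. split; first exact: In2.
  move=> P; apply: (iff_trans (per_iff _ P Q)).
  rewrite !In1 !In2_id; split.
    by case=> s d; rewrite s d.
  case=> s d; split => //.
  by move: d; rewrite s => /addrI /oppr_inj.
split; first by move=> P H; exact: (percase H).
split.
  case=> h1 h2 P /percase; rewrite h1 h2 => -[[-> ->]|[-> ->]].
    by left.
  by right; rewrite sub0r add0r.
case=> h1 h2 P /percase; rewrite h1 h2 => -[[-> ->]|[-> ->]].
  by [].
by split; ring.
Qed.
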